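(* Let $0<c_1\le c_2$ be constants, let $n$ be sufficiently large, let $t\in[1,n^{0.1}]$, and let $H$ be an undirected graph on $n$ vertices in which every vertex has degree between $c_1t$ and $c_2t$ and which has no cycle of length at most $8$. For every constant $\delta>0$ there is a constant $K$ (depending only on $\delta,c_1,c_2$) such that every nonempty vertex set $C$ with $H^2[C]$ of density at least $\delta$ satisfies $|C|\le Kt$.
   Context: $H^2$ (the square of $H$) is the graph on the vertex set of $H$ in which $u\neq v$ are adjacent if and only if there is a path of length exactly $2$ between $u$ and $v$ in $H$. For a graph with $n'\ge 2$ vertices and $m'$ edges its density is $m'/\binom{n'}{2}$; a one-vertex graph has density $1$. *)

(* Defs.v *)
From HB Require Import structures.
From mathcomp Require Import all_boot all_order all_algebra.
From mathcomp Require Import reals exp.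
Set Implicit Arguments. Unset Strict Implicit. Unset Printing Implicit Defensive.
Import Order.TTheory GRing.Theory Num.Theory.
Local Open Scope ring_scope.

Definition simple_graph (T : finType) (e : rel T) : Prop :=
  symmetric e /\ irreflexive e.

Definition deg (T : finType) (e : rel T) (x : T) : nat := #|[set y | e x y]|.

Definition no_short_cycle (T : finType) (e : rel T) (k : nat) : Prop :=
  forall s : seq T, uniq s -> (3 <= size s)%N -> (size s <= k)%N -> ~~ cycle e s.

Definition sqrel (T : finType) (e : rel T) : rel T :=
  fun u v => (u != v) && [exists w, e u w && e w v].

Definition induced_edges (T : finType) (g : rel T) (C : {set T}) : nat :=
  #|[set E : {set T} | (E \subset C) &&
       [exists u, exists v, (E == [set u; v]) && g u v]]|.

Definition induced_density (R : realType) (T : finType) (g : rel T) (C : {set T}) : R :=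
  if (#|C| <= 1)%N then 1
  else (induced_edges g C)%:R / ('C(#|C|, 2))%:R.

(* Main.v *)
Require Import Defs.
From HB Require Import structures.
From mathcomp Require Import all_boot all_order all_algebra.
From mathcomp Require Import reals exp.
Set Implicit Arguments. Unset Strict Implicit. Unset Printing Implicit Defensive.
Import Order.TTheory GRing.Theory Num.Theory.
Set Implicit Arguments. Unset Strict Implicit. Unset Printing Implicit Defensive.

Section Walks.
Variables (T : finType) (e : rel T).
Hypotheses (esym : symmetric e) (eirr : irreflexive e).

Fixpoint nb (s : seq T) : bool :=
  if s is x :: s' then (if s' is _ :: z :: _ then x != z else true) && nb s' else true.

Lemma dup s x : path e x s -> nb (x :: s) -> ~~ uniq (x :: s) ->
  exists c, [/\ uniq c, (3 <= size c)%N, (size c <= size s)%N & cycle e c].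
Proof.
elim: s x => [|y s IH] x; first by [].
move=> /= /andP[exy pys] /andP[nbx nbys].
rewrite negb_and negbK => /orP[xin|nu]; last first.
  have [c [c1 c2 c3 c4]] := IH y pys nbys nu.
  by exists c; split => //; apply: leqW.
case: (boolP (uniq (y :: s))) => [u|nu]; last first.
  have [c [c1 c2 c3 c4]] := IH y pys nbys nu.
  by exists c; split => //; apply: leqW.
have pxs : path e x (y :: s) by rewrite /= exy.
have [s1 [s2 E]] : exists s1 s2, y :: s = s1 ++ x :: s2.
  by case/splitPr: xin => s1 s2; exists s1, s2.
move: u pxs; rewrite E cat_uniq cat_path => /and3P[u1 /hasPn hx _] /andP[p1 /= /andP[ex _]].
case: s1 E u1 hx p1 ex => [|a [|b s1]] E u1 hx p1 ex.
- by case: E => yx; move: exy; rewrite yx eirr.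
- case: E => ya sE; by move: nbx; rewrite sE eqxx.
- exists [:: x, a, b & s1]; split => //.
  + rewrite cons_uniq u1 andbT; apply/negP => xin1.
    by move: (hx x); rewrite mem_head => /(_ isT); rewrite /= xin1.
  + have := congr1 size E; rewrite /= size_cat /= => ->.
    by rewrite /= -addSnnS ltnS leq_addr.
  + by move: p1 ex; rewrite /= rcons_path /= => /and3P[-> -> ->] ->.
Qed.

Lemma uniq_walk k s x : (forall c, uniq c -> (3 <= size c)%N -> (size c <= k)%N -> ~~ cycle e c) ->
  path e x s -> nb (x :: s) -> (size s <= k)%N -> uniq (x :: s).
Proof.
move=> nc ps nbs sk; apply/negPn/negP => nu.
have [c [c1 c2 c3 c4]] := dup ps nbs nu.
by move: (nc c c1 c2 (leq_trans c3 sk)); rewrite c4.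
Qed.

Hypothesis nc : forall c, uniq c -> (3 <= size c)%N -> (size c <= 8)%N -> ~~ cycle e c.

Lemma mid_unique v w w' x : e v w -> e w x -> e v w' -> e w' x -> v != x -> w = w'.
Proof.
move=> e1 e2 e3 e4 vx; apply/eqP/negPn/negP => ww.
have := @uniq_walk 8 [:: w; x; w'; v] v nc.
rewrite /= e1 e2 (esym x) e4 (esym w') e3 vx ww eq_sym vx mem_seq4 eqxx !orbT /=.
by move=> /(_ isT isT isT).
Qed.

Lemma inj8 v x x' y w1 w2 w1' w2' :
  e v w1 -> e w1 x -> e x w2 -> e w2 y ->
  e v w1' -> e w1' x' -> e x' w2' -> e w2' y ->
  w1 != w2 -> w1' != w2' -> v != x -> v != x' -> x != y -> x' != y -> x != x' -> False.
Proof.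
move=> e1 e2 e3 e4 f1 f2 f3 f4 n1 n2 vx vx' xy x'y xx'.
case: (eqVneq w1 w1') => [E|ww].
  subst w1'.
  have := @uniq_walk 8 [:: w2; x; w1; x'; w2'; y] y nc.
  rewrite /= (esym y) e4 (esym w2) e3 (esym x) e2 f2 f3 f4.
  rewrite eq_sym xy eq_sym n1 xx' n2 x'y /=.
  by rewrite !inE eqxx !orbT /= => /(_ isT isT isT).
have := @uniq_walk 8 [:: w2; x; w1; v; w1'; x'; w2'; y] y nc.
rewrite /= (esym y) e4 (esym w2) e3 (esym x) e2 (esym w1) e1 f1 f2 f3 f4.
rewrite eq_sym xy eq_sym n1 eq_sym vx ww vx' n2 x'y /=.
by rewrite !inE eqxx !orbT /= => /(_ isT isT isT).
Qed.

End Walks.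

Lemma card_pairs (T : finType) (X : {set T}) (F : T -> {set T}) :
  #|[set p : T * T | (p.1 \in X) && (p.2 \in F p.1)]| = (\sum_(x in X) #|F x|)%N.
Proof.
transitivity (\sum_x \sum_y (if (x \in X) && (y \in F x) then 1 else 0))%N.
  rewrite pair_bigA -sum1_card big_mkcond; apply: eq_bigr => -[x y] _; by rewrite inE.
rewrite [RHS]big_mkcond /=; apply: eq_bigr => x _.
case: (boolP (x \in X)) => xX.
  rewrite /= -sum1_card [RHS]big_mkcond; apply: eq_bigr => y _; by [].
by rewrite big1.
Qed.

Section Count.
Variables (T : finType) (e : rel T).
Hypotheses (esym : symmetric e) (eirr : irreflexive e).
Hypothesis nc : forall c, uniq c -> (3 <= size c)%N -> (size c <= 8)%N -> ~~ cycle e c.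
Variables (C : {set T}) (Dn : nat).
Hypothesis hD : forall w, (deg e w <= Dn)%N.

Definition Nb x := [set y in C | sqrel e x y].

Lemma sq_sym : symmetric (sqrel e).
Proof.
move=> u v; rewrite /sqrel eq_sym; congr (_ && _).
by apply/existsP/existsP => -[w /andP[a b]]; exists w; rewrite (esym _ w) b (esym w) a.
Qed.

Lemma E_le : (induced_edges (sqrel e) C <= \sum_(x in C) #|Nb x|)%N.
Proof.
rewrite -card_pairs.
set P := [set p : T * T | _].
apply: leq_trans (leq_imset_card (fun p : T * T => [set p.1; p.2]) P).
apply: subset_leq_card; apply/subsetP => E.
rewrite inE => /andP[sub /existsP[u /existsP[v /andP[/eqP EE suv]]]].
apply/imsetP; exists (u, v) => //.
rewrite inE /= !inE suv andbT.
by rewrite !(subsetP sub) // EE !inE eqxx ?orbT.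
Qed.

Lemma per_vertex v : (\sum_(x in Nb v) #|Nb x| <= #|C| + Dn * #|Nb v|)%N.
Proof.
pose B x := [set y | [exists w, e v w && e w x && e w y]].
pose G x := Nb x :\: B x.
have step x : x \in Nb v -> (#|Nb x| <= #|G x| + Dn)%N.
  rewrite inE => /andP[_ /andP[vx /existsP[w1 /andP[a1 b1]]]].
  rewrite -(cardsID (B x) (Nb x)) addnC leq_add2l.
  apply: leq_trans (hD w1); rewrite /deg; apply: subset_leq_card.
  apply/subsetP => y; rewrite !inE => /andP[_ /existsP[w /andP[/andP[a b] c]]].
  by rewrite (mid_unique esym eirr nc a1 b1 a b vx).
apply: (@leq_trans (\sum_(x in Nb v) (#|G x| + Dn))); first exact: leq_sum.
rewrite big_split /= sum_nat_const addnC [X in (_ <= X)%N]addnC mulnC leq_add2l.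
rewrite -card_pairs.
set P := [set p : T * T | _].
have inj : {in P &, injective (fun p : T * T => p.2)}.
  move=> [x y] [x' y']; rewrite !inE /= => /andP[hx hy] /andP[hx' hy'] /= yy.
  subst y'; case: (eqVneq x x') => [-> //|xx']; exfalso.
  move: hx hx' hy hy'.
  move=> /andP[_ /andP[vx /existsP[w1 /andP[a1 b1]]]].
  move=> /andP[_ /andP[vx' /existsP[w1' /andP[a1' b1']]]].
  move=> /andP[/negP nB /andP[_ /andP[xy /existsP[w2 /andP[a2 b2]]]]].
  move=> /andP[/negP nB' /andP[_ /andP[x'y /existsP[w2' /andP[a2' b2']]]]].
  have n1 : w1 != w2.
    by apply/negP => /eqP E; subst w2; apply: nB; apply/existsP; exists w1; rewrite a1 b1 b2.
  have n2 : w1' != w2'.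
    by apply/negP => /eqP E; subst w2'; apply: nB'; apply/existsP; exists w1'; rewrite a1' b1' b2'.
  exact: (inj8 esym eirr nc a1 b1 a2 b2 a1' b1' a2' b2' n1 n2 vx vx' xy x'y xx').
rewrite -(card_in_imset inj); apply: subset_leq_card; apply/subsetP => y.
by case/imsetP => -[x y'] /=; rewrite !inE => /andP[_ /andP[_ /andP[+ _]]] ->.
Qed.

Lemma sumsq : (\sum_(x in C) #|Nb x| * #|Nb x| <= #|C| * #|C| + Dn * \sum_(x in C) #|Nb x|)%N.
Proof.
have -> : (\sum_(x in C) #|Nb x| * #|Nb x| = \sum_(v in C) \sum_(x in Nb v) #|Nb x|)%N.
  transitivity (\sum_(x in C) \sum_(v in Nb x) #|Nb x|)%N.
    by apply: eq_bigr => x _; rewrite sum_nat_const.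
  rewrite (exchange_big_dep (fun v => v \in C)) /=; last by move=> i j _; rewrite inE => /andP[].
  apply: eq_bigr => v vC; apply: eq_bigl => x.
  by rewrite !inE vC sq_sym.
rewrite bigop.big_distrr /= -sum_nat_const -big_split /=.
by apply: leq_sum => v _; apply: per_vertex.
Qed.

End Count.

From mathcomp Require Import zify.

Lemma cs_nat (T : finType) (A : {set T}) (f : T -> nat) :
  ((\sum_(x in A) f x) * (\sum_(x in A) f x) <= #|A| * \sum_(x in A) f x * f x)%N.
Proof.
rewrite -(@leq_pmul2l 2) //.
have -> : (2 * ((\sum_(x in A) f x) * (\sum_(x in A) f x)) =
           \sum_(x in A) \sum_(y in A) 2 * (f x * f y))%N.
  rewrite bigop.big_distrl bigop.big_distrr /=; apply: eq_bigr => x _.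
  by rewrite bigop.big_distrr bigop.big_distrr /=; apply: eq_bigr => y _.
apply: (@leq_trans (\sum_(x in A) \sum_(y in A) (f x * f x + f y * f y))%N).
  apply: leq_sum => x _; apply: leq_sum => y _; move: (f x) (f y) => a b; case: (leqP a b) => h; [rewrite -(subnKC h) | rewrite -(subnKC (ltnW h))]; nia.
rewrite mul2n -addnn; under eq_bigr => x _ do rewrite big_split /= sum_nat_const.
by rewrite big_split /= sum_nat_const bigop.big_distrr /=.
Qed.

Lemma bin2_double m : (2 * 'C(m, 2) = m * m.-1)%N.
Proof.
elim: m => [//|m IH]; rewrite binS bin1 mulnDr IH /=.
case: m {IH} => [//|m] /=; nia.
Qed.

Lemma F2l m : (1 < m)%N -> (m * m <= 4 * 'C(m, 2))%N.
Proof.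
have := bin2_double m; move: ('C(m, 2)) => c.
case: m => [//|k] /= h1 h2; nia.
Qed.

From mathcomp Require Import lra.
Local Open Scope ring_scope.

Theorem lemmaA6 (R : realType) (c1 c2 : R) :
  0 < c1 -> c1 <= c2 ->
  exists N : nat, forall delta : R, 0 < delta ->
  exists K : R, forall (n : nat), (N <= n)%N ->
  forall (t : R), 1 <= t -> t <= powR (n%:R) (10%:R^-1) ->
  forall e : rel 'I_n, simple_graph e ->
  (forall x : 'I_n, c1 * t <= (deg e x)%:R /\ (deg e x)%:R <= c2 * t) ->
  no_short_cycle e 8 ->
  forall C : {set 'I_n}, C != set0 ->
  delta <= induced_density R (sqrel e) C ->
  (#|C|)%:R <= K * t.
Proof.
move=> c1p c12; exists 0%N => delta dp.
have c2p : 0 < c2 by apply: lt_le_trans c12.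
exists (16 * (1 + c2) / delta ^+ 2 + 1) => n _ t t1 _ e [esym eirr] hdeg nc C _ hd.
set Dn := (\max_(w : 'I_n) deg e w)%N.
have hD w : (deg e w <= Dn)%N by apply: leq_bigmax.
have Dr : Dn%:R <= c2 * t.
  apply: (big_ind (fun k : nat => k%:R <= c2 * t)).
  - have h0 : (0:R) <= c2 * t by apply: mulr_ge0; lra.
    exact: h0.
  - move=> a b ha hb; rewrite /maxn; case: ifP => //.
  - by move=> i _; case: (hdeg i).
have K1 : 1 <= 16 * (1 + c2) / delta ^+ 2 + 1.
  have : 0 <= 16 * (1 + c2) / delta ^+ 2.
    apply: divr_ge0; last exact: sqr_ge0. apply: mulr_ge0; lra.
  lra.
move: hd; rewrite /induced_density.
case: (leqP #|C| 1) => m1 hd.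
  have : (#|C|)%:R <= (1%:R : R) by rewrite ler_nat.
  move=> h; apply: (le_trans h); nra.
set m := #|C| in m1 hd *.
set S := (\sum_(x in C) #|Nb e C x|)%N.
have hE := @E_le _ e C.
have hQ := sumsq esym eirr nc C hD.
have hS : (S <= m * m)%N.
  rewrite /S -sum_nat_const; apply: leq_sum => x _; apply: subset_leq_card.
  by apply/subsetP => y; rewrite inE => /andP[].
have hCS := cs_nat C (fun x => #|Nb e C x|).
have F1 : (S * S <= m * m * m * (1 + Dn))%N.
  apply: (leq_trans hCS); rewrite -/S -/m.
  apply: (@leq_trans (m * (m * m + Dn * S))); first by rewrite leq_mul2l hQ orbT.
  apply: (@leq_trans (m * (m * m + Dn * (m * m)))); last by nia.
  by rewrite leq_mul2l leq_add2l leq_mul2l hS !orbT.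
have F2 : (m * m <= 4 * 'C(m, 2))%N.
  exact: F2l.
have Cp : (0 < 'C(m, 2))%N by rewrite bin_gt0.
move: hd; rewrite ler_pdivlMr ?ltr0n // => hd.
have h1 : delta * (m%:R ^+ 2) <= 4 * S%:R.
  have a : (m%:R ^+ 2 : R) <= 4 * ('C(m, 2))%:R.
    by rewrite -natrX -natrM ler_nat expnS expn1.
  have b : (induced_edges (sqrel e) C)%:R <= (S%:R : R) by rewrite ler_nat.
  nra.
have h2 : (S%:R : R) ^+ 2 <= m%:R ^+ 3 * (1 + Dn%:R).
  have := F1; rewrite -(ler_nat R) !natrM natrD => h.
  have e1 : (S%:R : R) ^+ 2 = S%:R * S%:R by rewrite expr2.
  have e2 : (m%:R : R) ^+ 3 = m%:R * m%:R * m%:R by rewrite !exprS expr0 mulr1 mulrA.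
  rewrite e1 e2; exact: h.
have mp : (0 : R) < m%:R by rewrite ltr0n; lia.
have h3 : delta ^+ 2 * m%:R <= 16 * (1 + Dn%:R).
  have h4 : (delta * m%:R ^+ 2) ^+ 2 <= 16 * m%:R ^+ 3 * (1 + Dn%:R).
    have h5 : 0 <= delta * m%:R ^+ 2 by apply: mulr_ge0; [lra | exact: sqr_ge0].
    have h6 := ler_pM h5 h5 h1 h1.
    rewrite expr2; nra.
  have m3 : (0 : R) < m%:R ^+ 3 by apply: exprn_gt0.
  rewrite -(ler_pM2r m3); nra.
set q := 16 * (1 + c2) / delta ^+ 2.
have d2p : 0 < delta ^+ 2 by apply: exprn_gt0.
have hq : q * delta ^+ 2 = 16 * (1 + c2) by rewrite /q divfK // gt_eqF.
have hq' : q * delta ^+ 2 * t = 16 * (1 + c2) * t by rewrite hq.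
have d2t : 0 <= delta ^+ 2 * t by apply: mulr_ge0; lra.
rewrite -(ler_pM2l d2p).
have -> : delta ^+ 2 * ((q + 1) * t) = q * delta ^+ 2 * t + delta ^+ 2 * t.
  by rewrite mulrDl mulrDr mul1r; congr (_ + _); rewrite mulrCA mulrA mulrC mulrA.
rewrite mulrC hq'; nra.
Qed.
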